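(* For every $M\geq 1$, $$h(M)=\sum_{0\leq 2j\leq M-1}(j+1)\binom{M-j-1}{j}.$$
   Context: The perimeter of a nonempty partition $\lambda$ with largest part $\lambda_1$ and $\ell(\lambda)$ parts is $\lambda_1+\ell(\lambda)-1$. $h(M)$ is the total number of parts, summed over all partitions into distinct parts with perimeter $M$. *)

(* Defs.v *)
From mathcomp Require Import all_boot.
Set Implicit Arguments. Unset Strict Implicit. Unset Printing Implicit Defensive.

(* A partition into distinct parts is determined by its (finite, nonempty)
   set of parts, all positive integers.  A partition with perimeter M has
   largest part <= M, so it suffices to range over sets of parts drawn from
   {1,...,M}; we encode them as subsets of 'I_M.+1 avoiding 0. *)

Definition parts (M : nat) (S : {set 'I_M.+1}) : seq nat :=
  sort geq [seq val i | i in S].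

Definition is_distinct_partition (M : nat) (S : {set 'I_M.+1}) : bool :=
  (S != set0) && (ord0 \notin S).

Definition largest_part (M : nat) (S : {set 'I_M.+1}) : nat :=
  \max_(i in S) val i.

Definition num_parts (M : nat) (S : {set 'I_M.+1}) : nat := size (parts S).

Definition perimeter (M : nat) (S : {set 'I_M.+1}) : nat :=
  largest_part S + num_parts S - 1.

Definition h (M : nat) : nat :=
  \sum_(S : {set 'I_M.+1} | is_distinct_partition S && (perimeter S == M))
     num_parts S.

(* Main.v *)
Require Import Defs.
From mathcomp Require Import all_boot.
From mathcomp Require Import zify.

Lemma num_partsE M (S : {set 'I_M.+1}) : num_parts S = #|S|.
Proof. by rewrite /num_parts /parts size_sort size_map cardE. Qed.

Definition Aset M m : {set 'I_M.+1} := [set i : 'I_M.+1 | 0 < i <= m].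

Lemma card_Aset M m : m <= M -> #|Aset M m| = m.
Proof.
move=> hm.
have -> : Aset M m = [set (inord (i : nat).+1 : 'I_M.+1) | i : 'I_m].
  apply/setP => x; rewrite !inE; apply/idP/imsetP.
  - move=> /andP[h1 h2]; have hx : (x : nat).-1 < m by lia.
    exists (Ordinal hx) => //; apply: val_inj => /=; have := ltn_ord x; rewrite inordK; lia.
  - case=> i _ ->; rewrite inordK; have := ltn_ord i; lia.
rewrite card_imset ?card_ord // => i j /(congr1 val) /=.
rewrite !inordK; [|have := ltn_ord j; lia|have := ltn_ord i; lia].
by case=> /val_inj.
Qed.

Lemma card_with (T : finType) (A : {set T}) x k : x \in A ->
  #|[set S : {set T} | (S \subset A) && (x \in S) && (#|S| == k.+1)]| = 'C(#|A|.-1, k).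
Proof.
move=> xA.
have hA : #|A| = (#|A :\ x|).+1 by rewrite (cardsD1 x A) xA.
have := cards_draws A k.+1.
rewrite -(cardsID [set S : {set T} | x \in S]) hA binS /=.
have -> : [set S : {set T} | (S \subset A) & #|S| == k.+1] :\: [set S : {set T} | x \in S]
   = [set S : {set T} | (S \subset A :\ x) & #|S| == k.+1].
  apply/setP => S; rewrite !inE; apply/idP/idP.
  - case/andP=> hx /andP[hs ->]; rewrite andbT; apply/subsetP => y yS.
    rewrite !inE (subsetP hs) // andbT; apply/eqP => e; subst; by rewrite yS in hx.
  - case/andP=> hs ->; rewrite andbT.
    have hx : x \notin S by apply/negP => /(subsetP hs); rewrite !inE eqxx.
    rewrite hx /=; apply: subset_trans hs _; exact: subsetDl.
rewrite cards_draws.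
rewrite [_ + 'C(_, k.+1)]addnC => /addnI <-.
apply: eq_card => S; rewrite !inE; case: (x \in S); rewrite ?andbT ?andbF //.
Qed.

Lemma set_eq M k : 1 <= k <= M.+1 ->
  [set S : {set 'I_M.+1} | is_distinct_partition S && (perimeter S == M) && (#|S| == k)]
  = [set S : {set 'I_M.+1} | (S \subset Aset M (M.+1 - k)) && ((inord (M.+1 - k) : 'I_M.+1) \in S) && (#|S| == k)].
Proof.
move=> /andP[k1 kM]; set m := M.+1 - k.
apply/setP => S; rewrite !inE.
case: (boolP (#|S| == k)) => [/eqP hk|]; rewrite ?andbF ?andbT //.
rewrite /is_distinct_partition /perimeter num_partsE hk.
apply/idP/idP.
- case/andP=> /andP[hne h0] /eqP hp.
  have hc : 0 < #|S| by rewrite card_gt0.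
  have [i0 i0S hmax] := eq_bigmax_cond (fun i : 'I_M.+1 => val i) hc.
  have hmax' : largest_part S = nat_of_ord i0 := hmax.
  have hp2 : nat_of_ord i0 + k - 1 = M by rewrite -hmax'.
  have hv : nat_of_ord i0 = m by rewrite /m; lia.
  have -> : (inord m : 'I_M.+1) = i0 by apply: val_inj; rewrite /= -hv inordK // ltn_ord.
  rewrite i0S andbT; apply/subsetP => i iS; rewrite inE.
  have hi0 : nat_of_ord i != 0.
    by apply: contraNneq h0 => e; have -> : ord0 = i by apply: val_inj.
  have hle : nat_of_ord i <= nat_of_ord i0.
    by move: (@leq_bigmax_cond _ (fun j => j \in S) (fun j : 'I_M.+1 => val j) i iS); rewrite hmax.
  lia.
- case/andP=> hsub hin.
  have hm : m <= M by rewrite /m; lia.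
  have hne : S != set0 by apply/set0Pn; exists (inord m).
  have h0 : ord0 \notin S by apply/negP => /(subsetP hsub); rewrite inE /=; lia.
  rewrite hne h0 /=.
  have -> : largest_part S = m.
    apply/eqP; rewrite eqn_leq; apply/andP; split.
    + apply/bigmax_leqP => i /(subsetP hsub); rewrite inE => /andP[_ h]; exact h.
    + have := @leq_bigmax_cond _ (fun j => j \in S) (fun i : 'I_M.+1 => val i) _ hin.
      by rewrite /= inordK // ltnS.
  apply/eqP; rewrite /m; lia.
Qed.

Lemma card_k M k : 1 <= M -> 1 <= k <= M.+1 ->
  #|[set S : {set 'I_M.+1} | is_distinct_partition S && (perimeter S == M) && (#|S| == k)]|
  = 'C(M - k, k.-1).
Proof.
move=> M1 hk; rewrite set_eq //.
case/andP: hk => k1 kM.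
case: (ltnP k M.+1) => hkM.
- have hm : M.+1 - k <= M by lia.
  have hx : (inord (M.+1 - k) : 'I_M.+1) \in Aset M (M.+1 - k).
    rewrite inE inordK; lia.
  have := @card_with _ _ _ k.-1 hx; rewrite card_Aset // prednK // => ->.
  by congr 'C(_, _); lia.
- have -> : k = M.+1 by lia.
  have -> : M - M.+1 = 0 by lia. have -> : M.+1 - M.+1 = 0 by lia. case: M M1 {hkM kM} => // n _ /=. rewrite bin0n.
  apply/eqP; rewrite cards_eq0; apply/eqP/setP => S; rewrite !inE.
  apply/negP => /andP[/andP[hs hin] _]; move/(subsetP hs): hin; rewrite inE.
  by rewrite inordK.
Qed.

Lemma cardS_le M (S : {set 'I_M.+1}) : #|S| < M.+2.
Proof. by have := max_card (mem S); rewrite card_ord. Qed.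

Theorem mainTheorem9 (M : nat) : 1 <= M ->
  h M = \sum_(0 <= j < M.+1 | 2 * j <= M - 1) (j + 1) * 'C(M - j - 1, j).
Proof.
move=> M1; rewrite /h.
rewrite (partition_big (fun S : {set 'I_M.+1} => (inord #|S| : 'I_M.+2)) predT) //=.
rewrite big_ord_recl big1; last first.
  move=> S /andP[/andP[/andP[hne _] _] /eqP e].
  have : #|S| = 0 by rewrite -[#|S|](@inordK M.+1) ?e // cardS_le.
  by move/eqP; rewrite cards_eq0 (negbTE hne).
rewrite add0n big_mkord [RHS]big_mkcond /=; apply: eq_bigr => j _.
rewrite (eq_bigr (fun _ => j.+1)); last first.
  by move=> S /andP[_ /eqP e]; rewrite num_partsE -[#|S|](@inordK M.+1) ?e ?cardS_le.
rewrite sum_nat_cond_const.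
have -> : #|[set S : {set 'I_M.+1} | is_distinct_partition S && (perimeter S == M)
            && ((inord #|S| : 'I_M.+2) == lift ord0 j)]|
   = #|[set S : {set 'I_M.+1} | is_distinct_partition S && (perimeter S == M) && (#|S| == j.+1)]|.
  apply: eq_card => S; by rewrite !inE -(inj_eq val_inj) /= inordK ?cardS_le.
rewrite card_k //; last by have := ltn_ord j; lia.
case: ifP => hj.
  by rewrite /= addn1 mulnC subnS subn1.
rewrite /= bin_small ?mul0n //; lia.
Qed.
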